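(* Let $\mathbb C$ be an essentially algebraic category. Define $\mathcal C$ by $\mathrm{Ob}\,\mathcal C=\mathbb C_0$, $\mathrm{Hom}(a,b)$ the setoid of pairs $(f,r)$ with $f\in\mathbb C_1$ and $r$ a proof of $\mathsf{dom}(f)=a\wedge\mathsf{cod}(f)=b$, where $(f,r)\sim(f',r')$ iff $f=_{\mathbb C_1}f'$; transports $\mathrm{Hom}(p,q)(f,r)=(f,r')$; $\mathrm{id}_a=(\mathsf{id}(a),r)$; and $(g,r)\circ(f,s)=(\mathsf{cmp}(u),r')$ where $u\in\mathbb C_2$ is the unique element with $\mathsf{snd}(u)=g$, $\mathsf{fst}(u)=f$. Then $\mathcal C$ is an HF-category. Conversely, let $\mathcal C$ be an HF-category and define $\mathbb C_0=\mathrm{Ob}\,\mathcal C$; $\mathbb C_1$ the setoid of triples $(a,b,f)$ with $f\in\mathrm{Hom}(a,b)$, where $(a,b,f)\sim(a',b',f')$ iff $\exists p:a=a',\exists q:b=b'$ with $\mathrm{Hom}(p,q)(f)=f'$; $\mathsf{dom}(a,b,f)=a$, $\mathsf{cod}(a,b,f)=b$, $\mathsf{id}(a)=(a,a,\mathrm{id}_a)$; $\mathbb C_2$ the setoid of triples $(\mathbf f,\mathbf g,p)$ with $p:\mathsf{cod}(\mathbf f)=\mathsf{dom}(\mathbf g)$, equality being componentwise equality of $\mathbf f,\mathbf g$; $\mathsf{fst}(\mathbf f,\mathbf g,p)=\mathbf f$, $\mathsf{snd}(\mathbf f,\mathbf g,p)=\mathbf g$; and $\mathsf{cmp}((a,b,f),(c,d,g),p)=(a,d,g\circ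 T(p)\circ f)$ with $T(p)=\mathrm{Hom}(r(b),p)(\mathrm{id}_b)\in\mathrm{Hom}(b,c)$. Then $\mathbb C$ is an essentially algebraic category (satisfies A1–A9).
   Context: Setoids are types with equivalence relations; extensional functions respect them. An essentially algebraic category $\mathbb C$ consists of setoids $\mathbb C_0,\mathbb C_1,\mathbb C_2$ (objects, arrows, composable pairs) and extensional functions $\mathsf{id}:\mathbb C_0\to\mathbb C_1$, $\mathsf{dom},\mathsf{cod}:\mathbb C_1\to\mathbb C_0$, $\mathsf{cmp},\mathsf{fst},\mathsf{snd}:\mathbb C_2\to\mathbb C_1$ satisfying: A1 $\mathsf{dom}(\mathsf{id}(x))=x$; A2 $\mathsf{cod}(\mathsf{id}(x))=x$; A3 $\mathsf{dom}(\mathsf{cmp}(u))=\mathsf{dom}(\mathsf{fst}(u))$; A4 $\mathsf{cod}(\mathsf{cmp}(u))=\mathsf{cod}(\mathsf{snd}(u))$; A5 $\mathsf{fst}(u)=\mathsf{fst}(v)$, $\mathsf{snd}(u)=\mathsf{snd}(v)\Rightarrow u=v$; A6 $\mathsf{dom}(f)=\mathsf{cod}(g)\Rightarrow\exists u\in\mathbb C_2(\mathsf{snd}(u)=f\wedge\mathsf{fst}(u)=g)$; A7 $\mathsf{fst}(u)=\mathsf{id}(y)\Rightarrow\mathsf{cmp}(u)=\mathsf{snd}(u)$; A8 $\mathsf{snd}(u)=\mathsf{id}(x)\Rightarrow\mathsf{cmp}(u)=\mathsf{fst}(u)$; A9 if $\mathsf{fst}(w)=\mathsf{fst}(v)$,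 $\mathsf{snd}(v)=\mathsf{fst}(u)$, $\mathsf{snd}(u)=\mathsf{snd}(z)$, $\mathsf{snd}(w)=\mathsf{cmp}(u)$, $\mathsf{cmp}(v)=\mathsf{fst}(z)$ then $\mathsf{cmp}(w)=\mathsf{cmp}(z)$. A proof-irrelevant family $H$ of setoids over a setoid $X$: setoids $H(x)$ and extensional transports $H(p):H(x)\to H(y)$ for $p:x=_Xy$ with (F1) $H(\mathrm{refl}(x))=_{\rm ext}\mathrm{id}$, (F2) $H(p)=_{\rm ext}H(q)$ for all $p,q:x=_Xy$, (F3) $H(q)\circ H(p)=_{\rm ext}H(q\circ p)$. An HF-category consists of a setoid $\mathrm{Ob}$, a proof-irrelevant family $\mathrm{Hom}$ over $\mathrm{Ob}\times\mathrm{Ob}$ with transports $\mathrm{Hom}(p,q)$, identities $\mathrm{id}_a\in\mathrm{Hom}(a,a)$, and extensional compositions $\circ_{a,b,c}:\mathrm{Hom}(b,c)\times\mathrm{Hom}(a,b)\to\mathrm{Hom}(a,c)$ satisfying identity and associativity laws and the coherence conditions $\mathrm{id}_{a'}=\mathrm{Hom}(p,p)(\mathrm{id}_a)$ for $p:a=a'$ and $\mathrm{Hom}(p,r)(g\circ f)=\mathrm{Hom}(q,r)(g)\circ\mathrm{Hom}(p,q)(f)$ for $p:a=a'$, $q:b=b'$, $r:c=c'$. $r(x)$ denotes the reflexivity proof of $x=x$. *)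

(* Defs.v *)
Set Implicit Arguments.

Record Setoid := MkSetoid {
  car :> Type;
  eqv : car -> car -> Type;
  srefl : forall x, eqv x x;
  ssym : forall x y, eqv x y -> eqv y x;
  strans : forall x y z, eqv x y -> eqv y z -> eqv x z  (* strans p q = q o p *)
}.
Arguments eqv {s} _ _.
Arguments srefl {s} _.
Arguments ssym {s x y} _.
Arguments strans {s x y z} _ _.

Definition Ext {A B : Setoid} (f : A -> B) : Type :=
  forall x y : A, eqv x y -> eqv (f x) (f y).

Definition ext_eq {A : Type} {B : Setoid} (f g : A -> B) : Type :=
  forall a, eqv (f a) (g a).

Definition prodS (A B : Setoid) : Setoid :=
  @MkSetoid (A * B)
    (fun x y => (eqv (fst x) (fst y) * eqv (snd x) (snd y))%type)
    (fun x => (srefl (fst x), srefl (snd x)))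
    (fun x y p => (ssym (fst p), ssym (snd p)))
    (fun x y z p q => (strans (fst p) (fst q), strans (snd p) (snd q))).

Record Family (X : Setoid) := MkFamily {
  fam :> X -> Setoid;
  tr : forall x y : X, eqv x y -> fam x -> fam y
}.
Arguments tr {X} f {x y} p _ : rename.

Record PIFamily {X : Setoid} (H : Family X) : Type := {
  tr_ext : forall (x y : X) (p : eqv x y), Ext (tr H p);
  F1 : forall x : X, ext_eq (tr H (srefl x)) (fun a => a);
  F2 : forall (x y : X) (p q : eqv x y), ext_eq (tr H p) (tr H q);
  F3 : forall (x y z : X) (p : eqv x y) (q : eqv y z),
         ext_eq (fun a => tr H q (tr H p a)) (tr H (strans p q))
}.

Record EAData := MkEAData {
  C0 : Setoid; C1 : Setoid; C2 : Setoid;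
  e_id : C0 -> C1;
  e_dom : C1 -> C0;
  e_cod : C1 -> C0;
  e_cmp : C2 -> C1;
  e_fst : C2 -> C1;
  e_snd : C2 -> C1
}.

Record EALaws (C : EAData) : Type := {
  ext_id : Ext (e_id C);
  ext_dom : Ext (e_dom C);
  ext_cod : Ext (e_cod C);
  ext_cmp : Ext (e_cmp C);
  ext_fst : Ext (e_fst C);
  ext_snd : Ext (e_snd C);
  A1 : forall x, eqv (e_dom C (e_id C x)) x;
  A2 : forall x, eqv (e_cod C (e_id C x)) x;
  A3 : forall u, eqv (e_dom C (e_cmp C u)) (e_dom C (e_fst C u));
  A4 : forall u, eqv (e_cod C (e_cmp C u)) (e_cod C (e_snd C u));
  A5 : forall u v, eqv (e_fst C u) (e_fst C v) -> eqv (e_snd C u) (e_snd C v) ->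
         eqv u v;
  A6 : forall f g, eqv (e_dom C f) (e_cod C g) ->
         { u : C2 C & (eqv (e_snd C u) f * eqv (e_fst C u) g)%type };
  A7 : forall u y, eqv (e_fst C u) (e_id C y) -> eqv (e_cmp C u) (e_snd C u);
  A8 : forall u x, eqv (e_snd C u) (e_id C x) -> eqv (e_cmp C u) (e_fst C u);
  A9 : forall w v u z,
         eqv (e_fst C w) (e_fst C v) ->
         eqv (e_snd C v) (e_fst C u) ->
         eqv (e_snd C u) (e_snd C z) ->
         eqv (e_snd C w) (e_cmp C u) ->
         eqv (e_cmp C v) (e_fst C z) ->
         eqv (e_cmp C w) (e_cmp C z)
}.

Record HFData := MkHFData {
  Ob : Setoid;
  Hom : Family (prodS Ob Ob);
  hid : forall a : Ob, Hom (a, a);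
  hcomp : forall a b c : Ob, Hom (b, c) -> Hom (a, b) -> Hom (a, c)
}.
Arguments hcomp h {a b c} _ _.

Definition Htr (H : HFData) {a a' b b' : Ob H} (p : eqv a a') (q : eqv b b')
  : Hom H (a, b) -> Hom H (a', b') :=
  @tr _ (Hom H) (a, b) (a', b') (p, q).

Record HFLaws (H : HFData) : Type := {
  hom_PI : PIFamily (Hom H);
  comp_ext : forall (a b c : Ob H) (g g' : Hom H (b, c)) (f f' : Hom H (a, b)),
      eqv g g' -> eqv f f' -> eqv (hcomp H g f) (hcomp H g' f');
  id_left : forall (a b : Ob H) (f : Hom H (a, b)), eqv (hcomp H (hid H b) f) f;
  id_right : forall (a b : Ob H) (f : Hom H (a, b)), eqv (hcomp H f (hid H a)) f;
  assoc : forall (a b c d : Ob H) (h : Hom H (c, d)) (g : Hom H (b, c))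
      (f : Hom H (a, b)),
      eqv (hcomp H h (hcomp H g f)) (hcomp H (hcomp H h g) f);
  coh_id : forall (a a' : Ob H) (p : eqv a a'),
      eqv (hid H a') (Htr H p p (hid H a));
  coh_comp : forall (a a' b b' c c' : Ob H) (p : eqv a a') (q : eqv b b')
      (r : eqv c c') (g : Hom H (b, c)) (f : Hom H (a, b)),
      eqv (Htr H p r (hcomp H g f)) (hcomp H (Htr H q r g) (Htr H p q f))
}.

Section EA_to_HF.
Variables (C : EAData) (L : EALaws C).

Definition EAHom (a b : C0 C) : Setoid :=
  @MkSetoid { f : C1 C & (eqv (e_dom C f) a * eqv (e_cod C f) b)%type }
    (fun x y => eqv (projT1 x) (projT1 y))
    (fun x => srefl (projT1 x))
    (fun x y p => ssym p)
    (fun x y z p q => strans p q).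

Definition EAHomFam : Family (prodS (C0 C) (C0 C)) :=
  @MkFamily (prodS (C0 C) (C0 C)) (fun x => EAHom (fst x) (snd x))
    (fun x y pq fr =>
       existT _ (projT1 fr)
         (strans (fst (projT2 fr)) (fst pq), strans (snd (projT2 fr)) (snd pq))).

Definition EAid (a : C0 C) : EAHomFam (a, a) :=
  existT _ (e_id C a) (A1 L a, A2 L a).

Definition EAcomp (a b c : C0 C) (g : EAHomFam (b, c)) (f : EAHomFam (a, b))
  : EAHomFam (a, c) :=
  let pu := A6 L (projT1 g) (projT1 f)
              (strans (fst (projT2 g)) (ssym (snd (projT2 f)))) in
  let u := projT1 pu in
  existT _ (e_cmp C u)
    (strans (A3 L u) (strans (ext_dom L _ _ (snd (projT2 pu))) (fst (projT2 f))),
     strans (A4 L u) (strans (ext_cod L _ _ (fst (projT2 pu))) (snd (projT2 g)))).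

Definition EA_to_HF : HFData :=
  @MkHFData (C0 C) EAHomFam EAid EAcomp.

End EA_to_HF.

Section HF_to_EA.
Variables (H : HFData) (L : HFLaws H).

Definition HFArr := { a : Ob H & { b : Ob H & Hom H (a, b) } }.

Definition HFArr_eq (x y : HFArr) : Type :=
  { p : eqv (projT1 x) (projT1 y) &
  { q : eqv (projT1 (projT2 x)) (projT1 (projT2 y)) &
    eqv (Htr H p q (projT2 (projT2 x))) (projT2 (projT2 y)) } }.

Lemma HFArr_refl (x : HFArr) : HFArr_eq x x.
Proof.
  destruct x as [a [b f]].
  exists (srefl a), (srefl b). exact (F1 (hom_PI L) (a, b) f).
Defined.

Lemma HFArr_trans (x y z : HFArr) : HFArr_eq x y -> HFArr_eq y z -> HFArr_eq x z.
Proof.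
  destruct x as [a [b f]], y as [a1 [b1 f1]], z as [a2 [b2 f2]].
  intros [p [q e]] [p' [q' e']]. simpl in *.
  exists (strans p p'), (strans q q').
  refine (strans _ e').
  refine (strans (ssym (F3 (hom_PI L) (a, b) (a1, b1) (a2, b2)
                         (p, q) (p', q') f)) _).
  exact (tr_ext (hom_PI L) (a1, b1) (a2, b2) (p', q') _ _ e).
Defined.

Lemma HFArr_sym (x y : HFArr) : HFArr_eq x y -> HFArr_eq y x.
Proof.
  destruct x as [a [b f]], y as [a1 [b1 f1]].
  intros [p [q e]]. simpl in *.
  exists (ssym p), (ssym q).
  refine (strans (tr_ext (hom_PI L) (a1, b1) (a, b)
                    (ssym p, ssym q) _ _ (ssym e)) _).
  refine (strans (F3 (hom_PI L) (a, b) (a1, b1) (a, b)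
                    (p, q) (ssym p, ssym q) f) _).
  refine (strans (F2 (hom_PI L) (a, b) (a, b) _ (@srefl (prodS (Ob H) (Ob H)) (a, b)) f) _).
  exact (F1 (hom_PI L) (a, b) f).
Defined.

Definition HFC1 : Setoid :=
  @MkSetoid HFArr HFArr_eq HFArr_refl HFArr_sym HFArr_trans.

Definition HFC0 : Setoid := Ob H.

Definition HFdom (x : HFC1) : HFC0 := projT1 x.
Definition HFcod (x : HFC1) : HFC0 := projT1 (projT2 x).
Definition HFid (a : HFC0) : HFC1 := existT _ a (existT _ a (hid H a)).

Definition HFC2 : Setoid :=
  @MkSetoid { f : HFC1 & { g : HFC1 & eqv (HFcod f) (HFdom g) } }
    (fun x y => (eqv (projT1 x) (projT1 y) *
                 eqv (projT1 (projT2 x)) (projT1 (projT2 y)))%type)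
    (fun x => (srefl _, srefl _))
    (fun x y e => (ssym (fst e), ssym (snd e)))
    (fun x y z e e' => (strans (fst e) (fst e'), strans (snd e) (snd e'))).

Definition HFfst (u : HFC2) : HFC1 := projT1 u.
Definition HFsnd (u : HFC2) : HFC1 := projT1 (projT2 u).

Definition HFT {b c : Ob H} (p : eqv b c) : Hom H (b, c) :=
  Htr H (srefl b) p (hid H b).

Definition HFcmp (u : HFC2) : HFC1 :=
  match u with
  | existT _ (existT _ a (existT _ b f)) (existT _ (existT _ c (existT _ d g)) p) =>
      existT _ a (existT _ d (hcomp H g (hcomp H (HFT p) f)))
  end.

Definition HF_to_EA : EAData :=
  @MkEAData HFC0 HFC1 HFC2 HFid HFdom HFcod HFcmp HFfst HFsnd.

End HF_to_EA.

(* Main.v *)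
Require Import Defs.

Section P1.
Variables (C : EAData) (L : EALaws C).

Definition dc {a b c : C0 C} (g : EAHomFam C (b, c)) (f : EAHomFam C (a, b)) :
  eqv (e_dom C (projT1 g)) (e_cod C (projT1 f)) :=
  strans (fst (projT2 g)) (ssym (snd (projT2 f))).

Lemma comp_char {a b c : C0 C} (g : EAHomFam C (b, c)) (f : EAHomFam C (a, b)) (u : C2 C) :
  eqv (e_snd C u) (projT1 g) -> eqv (e_fst C u) (projT1 f) ->
  eqv (projT1 (EAcomp L g f)) (e_cmp C u).
Proof.
  intros hs hf. unfold EAcomp; simpl.
  match goal with |- context [A6 ?L ?x ?y ?z] => destruct (A6 L x y z) as [u0 [s0 f0]] end; simpl.
  apply (ext_cmp L). apply (A5 L).
  - exact (strans f0 (ssym hf)).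
  - exact (strans s0 (ssym hs)).
Qed.

Lemma P1laws : HFLaws (@EA_to_HF C L).
Proof.
  unshelve econstructor.
  - unshelve econstructor.
    + intros x y p f g e. exact e.
    + intros x a. exact (srefl _).
    + intros x y p q a. exact (srefl _).
    + intros x y z p q a. exact (srefl _).
  - intros a b c g g' f f' eg ef. simpl in *.
    destruct (A6 L (projT1 g') (projT1 f') (dc g' f')) as [u [us uf]].
    refine (strans (comp_char g f u _ _) (ssym (comp_char g' f' u us uf))).
    + exact (strans us (ssym eg)).
    + exact (strans uf (ssym ef)).
  - intros a b f. simpl.
    destruct (A6 L (e_id C b) (projT1 f) (dc (EAid L b) f)) as [u [us uf]].
    refine (strans (comp_char (EAid L b) f u us uf) _).
    exact (strans (A8 L u b us) uf).
  - intros a b f. simpl.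
    destruct (A6 L (projT1 f) (e_id C a) (dc f (EAid L a))) as [u [us uf]].
    refine (strans (comp_char f (EAid L a) u us uf) _).
    exact (strans (A7 L u a uf) us).
  - intros a b c d h g f. simpl.
    destruct (A6 L (projT1 g) (projT1 f) (dc g f)) as [u1 [u1s u1f]].
    destruct (A6 L (projT1 h) (projT1 g) (dc h g)) as [v [vs vf]].
    assert (dz : eqv (e_dom C (projT1 h)) (e_cod C (e_cmp C u1))).
    { refine (strans (dc h g) _).
      exact (ssym (strans (A4 L u1) (ext_cod L _ _ u1s))). }
    destruct (A6 L (projT1 h) (e_cmp C u1) dz) as [z [zs zf]].
    assert (dw : eqv (e_dom C (e_cmp C v)) (e_cod C (projT1 f))).
    { refine (strans (A3 L v) _). refine (strans (ext_dom L _ _ vf) _).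
      exact (dc g f). }
    destruct (A6 L (e_cmp C v) (projT1 f) dw) as [w [ws wf]].
    pose proof (comp_char g f u1 u1s u1f) as E1.
    pose proof (comp_char h g v vs vf) as E2.
    refine (strans (comp_char h (EAcomp L g f) z zs (strans zf (ssym E1))) _).
    refine (strans _ (ssym (comp_char (EAcomp L h g) f w (strans ws (ssym E2)) wf))).
    apply ssym. apply (A9 L w u1 v z).
    + exact (strans wf (ssym u1f)).
    + exact (strans u1s (ssym vf)).
    + exact (strans vs (ssym zs)).
    + exact ws.
    + exact (ssym zf).
  - intros a a' p. simpl. exact (ext_id L _ _ (ssym p)).
  - intros a a' b b' c c' p q r g f. simpl.
    destruct (A6 L (projT1 g) (projT1 f) (dc g f)) as [u [us uf]].
    refine (strans (comp_char g f u us uf) _).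
    exact (ssym (comp_char (Htr _ q r g) (Htr _ p q f) u us uf)).
Qed.
End P1.

Section P2.
Variables (H : HFData) (L : HFLaws H).

Lemma tr_any {a b a' b' : Ob H} (p p' : eqv a a') (q q' : eqv b b') (f : Hom H (a,b)) :
  eqv (Htr H p q f) (Htr H p' q' f).
Proof. exact (F2 (hom_PI L) (a,b) (a',b') (p,q) (p',q') f). Qed.

Lemma tr_refl {a b : Ob H} (f : Hom H (a,b)) : eqv (Htr H (srefl a) (srefl b) f) f.
Proof. exact (F1 (hom_PI L) (a,b) f). Qed.

Lemma tr_ext' {a b a' b' : Ob H} (p : eqv a a') (q : eqv b b') (f g : Hom H (a,b)) :
  eqv f g -> eqv (Htr H p q f) (Htr H p q g).
Proof. exact (tr_ext (hom_PI L) (a,b) (a',b') (p,q) f g). Qed.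

Lemma tr_tr {a b a1 b1 a2 b2 : Ob H} (p1 : eqv a a1) (q1 : eqv b b1)
  (p2 : eqv a1 a2) (q2 : eqv b1 b2) (p3 : eqv a a2) (q3 : eqv b b2) (f : Hom H (a,b)) :
  eqv (Htr H p2 q2 (Htr H p1 q1 f)) (Htr H p3 q3 f).
Proof.
  refine (strans (F3 (hom_PI L) (a,b) (a1,b1) (a2,b2) (p1,q1) (p2,q2) f) _).
  exact (F2 (hom_PI L) (a,b) (a2,b2) _ (p3,q3) f).
Qed.

Lemma tr_inv {a b a' b' : Ob H} (p : eqv a a') (q : eqv b b') (f : Hom H (a,b)) g :
  eqv (Htr H p q f) g -> eqv f (Htr H (ssym p) (ssym q) g).
Proof.
  intro e. refine (strans (ssym (tr_refl f)) _).
  refine (strans (ssym (tr_tr p q (ssym p) (ssym q) _ _ f)) _).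
  exact (tr_ext' _ _ _ _ e).
Qed.

Lemma tr_id {a a' : Ob H} (p q : eqv a a') : eqv (Htr H p q (hid H a)) (hid H a').
Proof. exact (strans (tr_any p p q p _) (ssym (coh_id L a a' p))). Qed.

Lemma idlike {a b y c : Ob H} (pa : eqv a y) (pb : eqv b y) (f : Hom H (a,b))
  (e : eqv (Htr H pa pb f) (hid H y)) (q1 : eqv a c) (q2 : eqv b c) :
  eqv (Htr H q1 q2 f) (hid H c).
Proof.
  refine (strans (tr_ext' q1 q2 _ _ (tr_inv _ _ _ _ e)) _).
  refine (strans (tr_tr _ _ _ _ (strans (ssym pa) q1) (strans (ssym pb) q2) _) _).
  exact (tr_id _ _).
Qed.

Lemma T_tr {b c b' c' : Ob H} (p : eqv b c) (p' : eqv b' c') (pb : eqv b b') (pc : eqv c c') :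
  eqv (Htr H pb pc (HFT H p)) (HFT H p').
Proof.
  unfold HFT.
  refine (strans (tr_tr _ _ _ _ pb (strans pb p') _) _).
  refine (strans (ssym (tr_tr pb pb (srefl b') p' _ _ _)) _).
  apply tr_ext'. exact (ssym (coh_id L _ _ pb)).
Qed.

Lemma T_tr_id {b c c' : Ob H} (p : eqv b c) (p1 : eqv b c') (p2 : eqv c c') :
  eqv (Htr H p1 p2 (HFT H p)) (hid H c').
Proof.
  unfold HFT.
  refine (strans (tr_tr _ _ _ _ p1 p1 _) _).
  exact (tr_id _ _).
Qed.

Lemma T_any {b c : Ob H} (p p' : eqv b c) : eqv (HFT H p) (HFT H p').
Proof. exact (tr_any _ _ _ _ _). Qed.

Notation CE := (comp_ext L).

Lemma cmp_ext : Ext (@HFcmp H L).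
Proof.
  intros [[a [b f]] [[c [d g]] p]] [[a' [b' f']] [[c' [d' g']] p']] [[pa [pb e1]] [pc [pd e2]]].
  simpl in *. exists pa, pd.
  refine (strans (coh_comp L _ _ _ _ _ _ pa pc pd g _) _).
  refine (CE _ _ _ _ _ _ _ e2 _).
  refine (strans (coh_comp L _ _ _ _ _ _ pa pb pc _ f) _).
  refine (CE _ _ _ _ _ _ _ (T_tr _ _ _ _) e1).
Qed.

Lemma assoc_lem (a b c d e k : Ob H) (f : Hom H (a,b)) (g : Hom H (c,d)) (h : Hom H (e,k))
  (p p1 : eqv b c) (q q2 : eqv d e) :
  eqv (@HFcmp H L (existT _ (existT _ a (existT _ b f)) (existT _
         (@HFcmp H L (existT _ (existT _ c (existT _ d g)) (existT _ (existT _ e (existT _ k h)) q))) p1)) :> HFC1 L)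
      (@HFcmp H L (existT _ (@HFcmp H L (existT _ (existT _ a (existT _ b f)) (existT _ (existT _ c (existT _ d g)) p)))
         (existT _ (existT _ e (existT _ k h)) q2))).
Proof.
  simpl. exists (srefl a), (srefl k).
  refine (strans (tr_refl _) _).
  refine (strans (ssym (assoc L _ _ _ _ _ _ _)) _).
  refine (CE _ _ _ _ _ _ _ (srefl h) _).
  refine (strans (ssym (assoc L _ _ _ _ _ _ _)) _).
  refine (CE _ _ _ _ _ _ _ (T_any _ _) _).
  refine (CE _ _ _ _ _ _ _ (srefl g) _).
  refine (CE _ _ _ _ _ _ _ (T_any _ _) (srefl f)).
Qed.

Lemma P2laws : EALaws (@HF_to_EA H L).
Proof.
  unshelve econstructor.
  - intros x y p. simpl. exists p, p. exact (ssym (coh_id L _ _ p)).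
  - intros x y e. exact (projT1 e).
  - intros x y e. exact (projT1 (projT2 e)).
  - exact cmp_ext.
  - intros x y e. exact (fst e).
  - intros x y e. exact (snd e).
  - intros x. exact (srefl x).
  - intros x. exact (srefl x).
  - intros [[a [b f]] [[c [d g]] p]]. exact (srefl a).
  - intros [[a [b f]] [[c [d g]] p]]. exact (srefl d).
  - intros u v e1 e2. exact (e1, e2).
  - intros f g p. exists (existT _ g (existT _ f (ssym p))). exact (srefl _, srefl _).
  - intros [[a [b f]] [[c [d g]] p]] y [pa [pb e]]. simpl in *.
    exists (strans pa (strans (ssym pb) p)), (srefl d).
    refine (strans (coh_comp L _ _ _ _ _ _ _ (srefl c) (srefl d) g _) _).
    refine (strans (CE _ _ _ _ _ _ _ (tr_refl g) (coh_comp L _ _ _ _ _ _ _ p (srefl c) _ f)) _).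
    refine (strans (CE _ _ _ _ _ _ _ (srefl g)
               (CE _ _ _ _ _ _ _ (T_tr_id _ _ _) (idlike pa pb f e _ _))) _).
    refine (strans (CE _ _ _ _ _ _ _ (srefl g) (id_left L _ _ _)) _).
    exact (id_right L _ _ _).
  - intros [[a [b f]] [[c [d g]] p]] x [pc [pd e]]. simpl in *.
    exists (srefl a), (strans pd (strans (ssym pc) (ssym p))).
    refine (strans (coh_comp L _ _ _ _ _ _ _ (ssym p) _ g _) _).
    refine (strans (CE _ _ _ _ _ _ _ (idlike pc pd g e _ _) (coh_comp L _ _ _ _ _ _ _ (srefl b) (ssym p) _ f)) _).
    refine (strans (CE _ _ _ _ _ _ _ (srefl _)
               (CE _ _ _ _ _ _ _ (T_tr_id _ _ _) (tr_refl f))) _).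
    refine (strans (id_left L _ _ _) _).
    exact (id_left L _ _ _).
  - intros w [[a1 [b1 f]] [[c1 [d1 g]] pv]] [G' [[c3 [d3 h]] pu]] z e1 e2 e3 e4 e5.
    pose (pu0 := strans (projT1 (projT2 e2)) pu : eqv d1 c3).
    pose (u0 := existT _ (existT _ c1 (existT _ d1 g))
                  (existT _ (existT _ c3 (existT _ d3 h)) pu0) : HFC2 L).
    assert (hu : eqv (@HFcmp H L u0) (@HFcmp H L (existT _ G' (existT _ (existT _ c3 (existT _ d3 h)) pu)))).
    { apply cmp_ext. exact (e2, srefl _). }
    pose (w0 := existT _ (existT _ a1 (existT _ b1 f)) (existT _ (@HFcmp H L u0) pv) : HFC2 L).
    assert (hw : eqv (@HFcmp H L w) (@HFcmp H L w0)).
    { apply cmp_ext. exact (e1, strans e4 (ssym hu)). }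
    pose (z0 := existT _ (@HFcmp H L (existT _ (existT _ a1 (existT _ b1 f)) (existT _ (existT _ c1 (existT _ d1 g)) pv)))
                  (existT _ (existT _ c3 (existT _ d3 h)) pu0) : HFC2 L).
    assert (hz : eqv (@HFcmp H L z0) (@HFcmp H L z)).
    { apply cmp_ext. exact (e5, e3). }
    refine (strans hw (strans _ hz)).
    exact (assoc_lem _ _ _ _ _ _ f g h pv pv pu0 pu0).
Qed.
End P2.

Theorem mainTheorem8 :
  (forall (C : EAData) (L : EALaws C), HFLaws (@EA_to_HF C L)) *
  (forall (H : HFData) (L : HFLaws H), EALaws (@HF_to_EA H L)).
Proof.
  split.
  - intros C L. exact (@P1laws C L).
  - intros H L. exact (@P2laws H L).
Qed.
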